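(* Let $r\in\mathbb{R}$. For all integers $n \geq m \geq 0$, \[ S_2(n,m) = \sum_{l=0}^m \binom{n}{l} (-1)^l r^l S_{2,r}(n-l,m-l). \]
   Context: $S_2(n,k)$ denotes the Stirling numbers of the second kind, given by $\frac{1}{k!}(e^t-1)^k = \sum_{n\ge k} S_2(n,k)\frac{t^n}{n!}$. For $r\in\mathbb{R}$ and integer $k\ge 0$, the extended Stirling numbers of the second kind $S_{2,r}(n,k)$ are defined by \[ \frac{1}{k!}(e^t-1+rt)^k = \sum_{n=k}^\infty S_{2,r}(n,k)\frac{t^n}{n!}, \] with $S_{2,r}(a,b)=0$ whenever $a<b$. *)

(* Defs.v *)
From HB Require Import structures.
From mathcomp Require Import all_boot all_order all_algebra.
From mathcomp Require Import reals.
Set Implicit Arguments. Unset Strict Implicit. Unset Printing Implicit Defensive.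
Import Order.TTheory GRing.Theory Num.Theory.
Local Open Scope ring_scope.

(* Coefficients of degree <= N of any product of power series only depend on
   the coefficients of degree <= N of the factors, so the exact coefficient
   [t^n] of a power of (e^t - 1 + r t) is obtained by truncating at N = n. *)
Definition exp_trunc (R : realType) (N : nat) : {poly R} :=
  \poly_(i < N.+1) (i`!%:R)^-1.

(* Stirling numbers of the second kind:
   (1/k!) (e^t - 1)^k = sum_{n>=k} S2 n k t^n / n!,
   so S2 n k = n!/k! * [t^n] (e^t - 1)^k  (and 0 for n < k automatically). *)
Definition S2 (R : realType) (n k : nat) : R :=
  n`!%:R / k`!%:R * ((exp_trunc R n - 1) ^+ k)`_n.

(* Extended Stirling numbers of the second kind:
   (1/k!) (e^t - 1 + r t)^k = sum_{n>=k} S2r r n k t^n / n!. *)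
Definition S2r (R : realType) (r : R) (n k : nat) : R :=
  n`!%:R / k`!%:R * ((exp_trunc R n - 1 + r *: 'X) ^+ k)`_n.

(* Main.v *)
Require Import Defs.
From HB Require Import structures.
From mathcomp Require Import all_boot all_order all_algebra.
From mathcomp Require Import reals.
From mathcomp Require Import ring.
Import Order.TTheory GRing.Theory Num.Theory.
Local Open Scope ring_scope.

Lemma powX_split (R : realType) (s k : nat) (a b : {poly R}) :
  exists c : {poly R}, (a + b * 'X^s) ^+ k = a ^+ k + c * 'X^s.
Proof.
elim: k => [|k [c IH]]; first by exists 0; rewrite !expr0 mul0r addr0.
exists (a * c + b * a ^+ k + b * c * 'X^s).
rewrite exprS IH.
rewrite exprS; ring.
Qed.

Lemma coef_pow_agree (R : realType) (j k : nat) (p q : {poly R}) :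
  (forall i, (i <= j)%N -> p`_i = q`_i) -> (p ^+ k)`_j = (q ^+ k)`_j.
Proof.
move=> H.
have E : take_poly j.+1 p = take_poly j.+1 q.
  by apply/polyP => i; rewrite !coef_take_poly; case: ifP => // /H.
have key : forall u : {poly R}, (u ^+ k)`_j = ((take_poly j.+1 u) ^+ k)`_j.
  move=> u; rewrite -{1}(poly_take_drop j.+1 u).
  have [c ->] := @powX_split R j.+1 k (take_poly j.+1 u) (drop_poly j.+1 u).
  rewrite coefD coefMXn ltnSn addr0 //.
by rewrite key E -key.
Qed.

Lemma trunc_agree (R : realType) (r : R) (N j k : nat) : (j <= N)%N ->
  ((exp_trunc R N - 1 + r *: 'X) ^+ k)`_j =
  ((exp_trunc R j - 1 + r *: 'X) ^+ k)`_j.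
Proof.
move=> hj; apply: coef_pow_agree => i hi.
rewrite !(coefD, coefN, coefB) /exp_trunc !coef_poly.
rewrite !ltnS hi (leq_trans hi hj) /=.
by [].
Qed.

Theorem theorem3 (R : realType) (r : R) (n m : nat) :
  (m <= n)%N ->
  S2 R n m =
  \sum_(l < m.+1)
     'C(n, l)%:R * (-1) ^+ l * r ^+ l * S2r r (n - l) (m - l).
Proof.
move=> hmn.
rewrite /S2.
set P := exp_trunc R n - 1 + r *: 'X.
have -> : exp_trunc R n - 1 = P + (- (r *: 'X)) by rewrite /P addrK.
rewrite exprDn coef_sum mulr_sumr.
apply: eq_bigr => [[l hl]] _ /=.
have hlm : (l <= m)%N by [].
have hln : (l <= n)%N := leq_trans hlm hmn.
rewrite -scaleNr exprZn -scalerAr coefMn coefZ coefMXn.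
rewrite ltnNge hln /=.
rewrite /S2r (@trunc_agree R r n (n - l) (m - l) (leq_subr l n)).
have f0 : forall k, (k`!%:R : R) != 0 by move=> k; rewrite pnatr_eq0 -lt0n fact_gt0.
have Hn : (n`!%:R : R) = 'C(n, l)%:R * (l`!%:R * (n - l)`!%:R).
  by rewrite -!natrM bin_fact.
have Hm : (m`!%:R : R) = 'C(m, l)%:R * (l`!%:R * (m - l)`!%:R).
  by rewrite -!natrM bin_fact.
rewrite -mulr_natr -mulN1r exprMn Hn Hm.
have fC : ('C(m, l)%:R : R) != 0 by rewrite pnatr_eq0 -lt0n bin_gt0.
have ha := f0 l. have hb := f0 (m - l)%N.
field.
by rewrite ha hb fC.
Qed.
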